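(* Let ${\bf D}$ be an $L\times N$ complex matrix with $L=Rd$, $N=Md$, whose columns have unit Euclidean norm, partitioned into consecutive column-blocks ${\bf D}[1],\dots,{\bf D}[M]$ of size $L\times d$, and assume ${\bf D}{\bf g}\neq{\bf 0}$ for every nonzero block $2k$-sparse ${\bf g}\in\mathbb{C}^N$. Let ${\bf x}_0\in\mathbb{C}^N$ be block $k$-sparse and ${\bf y}={\bf D}{\bf x}_0$. Let ${\bf D}_0$ be the $L\times (kd)$ matrix formed by the blocks ${\bf D}[\ell]$ corresponding to the nonzero blocks of ${\bf x}_0$ (so that the support has $k$ blocks), and $\overline{{\bf D}}_0$ the $L\times(N-kd)$ matrix formed by the remaining blocks of ${\bf D}$. If $$\rho_c({\bf D}_0^\dagger\overline{{\bf D}}_0)<1,$$ then both the BOMP algorithm and L-OPT recover ${\bf x}_0$ from ${\bf y}$. Moreover, in this case BOMP picks a correct new block (a block ${\bf D}[\ell]$ belonging to ${\bf D}_0$, not previously selected) in each step, and consequently converges (recovers ${\bf x}_0$) in at most $k$ steps.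
   Context: Vectors ${\bf x}\in\mathbb{C}^N$, $N=Md$, are viewed as concatenations of consecutive length-$d$ blocks ${\bf x}[1],\dots,{\bf x}[M]$; ${\bf x}$ is block $k$-sparse if $\|{\bf x}[\ell]\|_2>0$ for at most $k$ indices $\ell$. $\rho(\cdot)$ is the spectral norm and ${\bf A}^\dagger$ the Moore–Penrose pseudo-inverse. For a matrix ${\bf A}$ whose row and column numbers are multiples of $d$, with $(\ell,r)$th $d\times d$ block ${\bf A}[\ell,r]$, $\rho_c({\bf A})=\max_r\sum_\ell\rho({\bf A}[\ell,r])$. L-OPT: solve $\min_{\bf x}\sum_{\ell=1}^M\|{\bf x}[\ell]\|_2$ subject to ${\bf y}={\bf D}{\bf x}$; recovery means ${\bf x}_0$ is the unique minimizer. BOMP: initialize ${\bf r}_0={\bf y}$ and the selected index set $\mathcal I=\emptyset$. At stage $\ell\ge1$ choose $i_\ell=\arg\max_i\|{\bf D}^H[i]{\bf r}_{\ell-1}\|_2$, add $i_\ell$ to $\mathcal I$, compute coefficients ${\bf x}_\ell[i]$, $i\in\mathcal I$, minimizing $\|{\bf y}-\sum_{i\in\mathcal I}{\bf D}[i]{\bf x}_\ell[i]\|_2$, and set ${\bf r}_\ell={\bf y}-\sum_{i\in\mathcal I}{\bf D}[i]{\bf x}_\ell[i]$. Recovery means the resulting coefficient vector (zero on unselected blocks) equals ${\bf x}_0$. *)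

(* Defs.v *)
From HB Require Import structures.
From mathcomp Require Import all_boot all_order all_algebra.
From mathcomp Require Import classical_sets boolp reals.
From mathcomp Require Import complex.
From mathcomp Require Import zify.

Set Implicit Arguments.
Unset Strict Implicit.
Unset Printing Implicit Defensive.

Import Order.TTheory GRing.Theory Num.Theory.
Local Open Scope ring_scope.

Lemma bidx_proof (p d : nat) (l : 'I_p) (r : 'I_d) : (l * d + r < p * d)%N.
Proof.
have hl := ltn_ord l; have hr := ltn_ord r.
have : (l.+1 * d <= p * d)%N by rewrite leq_mul2r hl orbT.
rewrite mulSn; lia.
Qed.

(* the r-th entry (0-based) of the l-th block (0-based) *)
Definition bidx (p d : nat) (l : 'I_p) (r : 'I_d) : 'I_(p * d) :=
  Ordinal (bidx_proof l r).

Lemma bdiv_proof (p d : nat) (j : 'I_(p * d)) : (j %/ d < p)%N.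
Proof.
have : (nat_of_ord j < p * d)%N := ltn_ord j.
move: (nat_of_ord j) => n; clear j.
by case: d => [|d]; [rewrite muln0 | rewrite ltn_divLR].
Qed.

Lemma bmod_proof (p d : nat) (j : 'I_(p * d)) : (j %% d < d)%N.
Proof.
have : (nat_of_ord j < p * d)%N := ltn_ord j.
move: (nat_of_ord j) => n; clear j.
by case: d => [|d]; [rewrite muln0 | rewrite ltn_pmod].
Qed.

Definition bdiv (p d : nat) (j : 'I_(p * d)) : 'I_p := Ordinal (bdiv_proof j).
Definition bmod (p d : nat) (j : 'I_(p * d)) : 'I_d := Ordinal (bmod_proof j).

Section Defs.
Variable R : realType.
Local Notation C := (R[i]).

Definition enorm (n : nat) (v : 'cV[C]_n) : R :=
  Num.sqrt (\sum_(i < n) (Normc.normc (v i 0)) ^+ 2).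

Definition adjmx (m n : nat) (A : 'M[C]_(m, n)) : 'M[C]_(n, m) :=
  (map_mx (@conjc R) A)^T.

Definition rho (m n : nat) (A : 'M[C]_(m, n)) : R :=
  sup [set t : R | exists v : 'cV[C]_n, enorm v <= 1 /\ t = enorm (A *m v)].

(* Moore--Penrose pseudo-inverse: the (unique) X satisfying the four Penrose equations *)
Definition penrose (m n : nat) (A : 'M[C]_(m, n)) (X : 'M[C]_(n, m)) : Prop :=
  [/\ A *m X *m A = A, X *m A *m X = X,
      adjmx (A *m X) = A *m X & adjmx (X *m A) = X *m A].

Definition pinv (m n : nat) (A : 'M[C]_(m, n)) : 'M[C]_(n, m) :=
  xget 0 [set X | penrose A X].

Definition blk (M d : nat) (x : 'cV[C]_(M * d)) (l : 'I_M) : 'cV[C]_d :=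
  \col_(r < d) x (bidx l r) 0.

Definition Dblk (L M d : nat) (D : 'M[C]_(L, M * d)) (l : 'I_M) : 'M[C]_(L, d) :=
  \matrix_(i < L, r < d) D i (bidx l r).

Definition subblk (p q d : nat) (A : 'M[C]_(p * d, q * d)) (l : 'I_p) (r : 'I_q)
  : 'M[C]_d :=
  \matrix_(a < d, b < d) A (bidx l a) (bidx r b).

Definition rho_c (p q d : nat) (A : 'M[C]_(p * d, q * d)) : R :=
  \big[Num.max/0]_(r < q) \sum_(l < p) rho (subblk A l r).

Definition bsupp (M d : nat) (x : 'cV[C]_(M * d)) : {set 'I_M} :=
  [set l | blk x l != 0].

Definition block_sparse (M d k : nat) (x : 'cV[C]_(M * d)) : Prop :=
  (#|bsupp x| <= k)%N.

(* the matrix formed by the column blocks D[l], l in S, in increasing order of l *)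
Definition colblk (L M d : nat) (D : 'M[C]_(L, M * d)) (S : {set 'I_M})
  : 'M[C]_(L, #|S| * d) :=
  \matrix_(i < L, j < #|S| * d) D i (bidx (enum_val (bdiv j)) (bmod j)).

Definition l21 (M d : nat) (x : 'cV[C]_(M * d)) : R :=
  \sum_(l < M) enorm (blk x l).

Definition LOPT_recovers (L M d : nat) (D : 'M[C]_(L, M * d)) (y : 'cV[C]_L)
  (x0 : 'cV[C]_(M * d)) : Prop :=
  D *m x0 = y /\ (forall x : 'cV[C]_(M * d), D *m x = y -> x <> x0 -> l21 x0 < l21 x).

Definition supported_on (M d : nat) (I : {set 'I_M}) (x : 'cV[C]_(M * d)) : Prop :=
  forall l, l \notin I -> blk x l = 0.

Definition ls_sol (L M d : nat) (D : 'M[C]_(L, M * d)) (y : 'cV[C]_L)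
  (I : {set 'I_M}) (x : 'cV[C]_(M * d)) : Prop :=
  supported_on I x /\
  (forall z : 'cV[C]_(M * d), supported_on I z -> enorm (y - D *m x) <= enorm (y - D *m z)).

(* A run of t stages of BOMP (all admissible tie-breakings allowed).
   sel l  = index i_(l+1) selected at stage l+1 (0-based list of selections),
   xs l   = coefficient vector x_l after l stages (zero on unselected blocks), xs 0 = 0,
   so the residual after l stages is r_l = y - D xs l (r_0 = y). *)
Definition bomp_run (L M d : nat) (D : 'M[C]_(L, M * d)) (y : 'cV[C]_L)
  (sel : nat -> 'I_M) (xs : nat -> 'cV[C]_(M * d)) (t : nat) : Prop :=
  xs 0%N = 0 /\
  forall l : nat, (l < t)%N ->
    (forall i : 'I_M, enorm (adjmx (Dblk D i) *m (y - D *m xs l))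
                      <= enorm (adjmx (Dblk D (sel l)) *m (y - D *m xs l)))
    /\ ls_sol D y [set sel (nat_of_ord j) | j : 'I_l.+1] (xs l.+1).

End Defs.

(* Main.v *)
Require Import Defs.
From HB Require Import structures.
From mathcomp Require Import all_boot all_order all_algebra.
From mathcomp Require Import classical_sets boolp reals.
From mathcomp Require Import complex.
From mathcomp Require Import zify ring lra.

Set Implicit Arguments.
Unset Strict Implicit.
Unset Printing Implicit Defensive.

Import Order.TTheory GRing.Theory Num.Theory.
Local Open Scope ring_scope.
Section Norms.
Variable R : realType.
Local Notation C := (R[i]).
Local Open Scope complex_scope.

Definition dot n (u v : 'cV[C]_n) : C := \sum_i conjc (u i 0) * v i 0.

Lemma normcC (x : C) : `|x| = (Normc.normc x)%:C. Proof. by []. Qed.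

Lemma normc_ge0 (x : C) : 0 <= Normc.normc x.
Proof. by rewrite -ler0c -normcC normr_ge0. Qed.

Lemma enorm_ge0 n (v : 'cV[C]_n) : 0 <= enorm v.
Proof. exact: sqrtr_ge0. Qed.

Lemma enorm_sqr n (v : 'cV[C]_n) : enorm v ^+ 2 = \sum_i Normc.normc (v i 0) ^+ 2.
Proof. by rewrite sqr_sqrtr // sumr_ge0 // => i _; rewrite sqr_ge0. Qed.

Lemma dot_self n (v : 'cV[C]_n) : dot v v = (enorm v ^+ 2)%:C.
Proof.
rewrite enorm_sqr rmorph_sum; apply: eq_bigr => i _.
by rewrite rmorphXn mulrC -sqr_normc.
Qed.

Lemma dotDr n (u v w : 'cV[C]_n) : dot u (v + w) = dot u v + dot u w.
Proof. by rewrite /dot -big_split; apply: eq_bigr => i _; rewrite mxE mulrDr. Qed.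

Lemma dotZr n a (u v : 'cV[C]_n) : dot u (a *: v) = a * dot u v.
Proof. by rewrite /dot mulr_sumr; apply: eq_bigr => i _; rewrite mxE mulrCA. Qed.

Lemma dotC n (u v : 'cV[C]_n) : dot v u = conjc (dot u v).
Proof.
rewrite /dot rmorph_sum; apply: eq_bigr => i _.
by rewrite rmorphM /= conjcK mulrC.
Qed.

Lemma dotDl n (u v w : 'cV[C]_n) : dot (v + w) u = dot v u + dot w u.
Proof. by rewrite dotC dotDr rmorphD /= -!dotC. Qed.

Lemma dotZl n a (u v : 'cV[C]_n) : dot (a *: v) u = conjc a * dot v u.
Proof. by rewrite dotC dotZr rmorphM /= -dotC. Qed.

Lemma dotNr n (u v : 'cV[C]_n) : dot u (- v) = - dot u v.
Proof. by rewrite -scaleN1r dotZr mulN1r. Qed.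

Lemma dotNl n (u v : 'cV[C]_n) : dot (- v) u = - dot v u.
Proof. by rewrite -scaleN1r dotZl rmorphN rmorph1 mulN1r. Qed.

Lemma dotE n (u v : 'cV[C]_n) : dot u v = (adjmx u *m v) 0 0.
Proof. by rewrite !mxE; apply: eq_bigr => i _; rewrite !mxE. Qed.

Lemma adjmxM m n p (A : 'M[C]_(m, n)) (B : 'M[C]_(n, p)) :
  adjmx (A *m B) = adjmx B *m adjmx A.
Proof. by rewrite /adjmx map_mxM trmx_mul. Qed.

Lemma adjmxK m n (A : 'M[C]_(m, n)) : adjmx (adjmx A) = A.
Proof. by apply/matrixP => i j; rewrite !mxE conjcK. Qed.

Lemma adjmxD m n (A B : 'M[C]_(m, n)) : adjmx (A + B) = adjmx A + adjmx B.
Proof. by apply/matrixP => i j; rewrite !mxE rmorphD. Qed.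

Lemma adjmxN m n (A : 'M[C]_(m, n)) : adjmx (- A) = - adjmx A.
Proof. by apply/matrixP => i j; rewrite !mxE rmorphN. Qed.

Lemma adjmx1 n : adjmx (1%:M : 'M[C]_n) = 1%:M.
Proof. by apply/matrixP => i j; rewrite !mxE conjc_nat eq_sym. Qed.

Lemma adjmx0 m n : adjmx (0 : 'M[C]_(m, n)) = 0.
Proof. by apply/matrixP => i j; rewrite !mxE conjc0. Qed.

Lemma dot_adj m n (A : 'M[C]_(m, n)) (u : 'cV[C]_m) (v : 'cV[C]_n) :
  dot (adjmx A *m u) v = dot u (A *m v).
Proof. by rewrite !dotE adjmxM adjmxK mulmxA. Qed.

Lemma enorm_eq0 n (v : 'cV[C]_n) : enorm v = 0 -> v = 0.
Proof.
move=> h; have : enorm v ^+ 2 = 0 by rewrite h expr0n.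
rewrite enorm_sqr => /eqP; rewrite psumr_eq0 => [/allP H|i _]; last by rewrite sqr_ge0.
apply/matrixP => i j; rewrite (ord1 j) mxE.
have := H i (mem_index_enum _); rewrite sqrf_eq0 => /eqP/Normc.eq0_normc //.
Qed.

Lemma enorm0 n : enorm (0 : 'cV[C]_n) = 0.
Proof.
rewrite /enorm big1 ?sqrtr0 // => i _; rewrite mxE.
by rewrite Normc.normc0 expr0n.
Qed.

Lemma enorm_eq0P n (v : 'cV[C]_n) : (enorm v == 0) = (v == 0).
Proof. by apply/eqP/eqP => [/enorm_eq0|->] //; rewrite enorm0. Qed.

Lemma enormZ n a (v : 'cV[C]_n) : enorm (a *: v) = Normc.normc a * enorm v.
Proof.
have -> : Normc.normc a = Num.sqrt (Normc.normc a ^+ 2).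
  by rewrite sqrtr_sqr ger0_norm ?normc_ge0.
rewrite /enorm.
rewrite -sqrtrM ?sqr_ge0 // mulr_sumr; congr Num.sqrt; apply: eq_bigr => i _.
by rewrite mxE Normc.normcM exprMn.
Qed.

Lemma enormN n (v : 'cV[C]_n) : enorm (- v) = enorm v.
Proof.
rewrite -scaleN1r enormZ.
have -> : Normc.normc (-1 : C) = 1.
  by apply: (@complexI R); rewrite -normcC normrN1.
by rewrite mul1r.
Qed.

Lemma normcJ' (x : C) : Normc.normc (conjc x) = Normc.normc x.
Proof. by apply: (@complexI R); rewrite -!normcC normcJ. Qed.

Lemma RCsq (x : R) : (x ^+ 2)%:C = x%:C * x%:C :> C.
Proof. by rewrite expr2 rmorphM. Qed.

Lemma CS n (u v : 'cV[C]_n) : Normc.normc (dot u v) <= enorm u * enorm v.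
Proof.
have [v0|nv0] := eqVneq (enorm v) 0.
  move/enorm_eq0: v0 => ->; rewrite /dot big1 ?mulr0.
    by rewrite Normc.normc0 enorm0 mulr0.
  by move=> i _; rewrite mxE mulr0.
have ev : 0 < enorm v by rewrite lt_def nv0 enorm_ge0.
set a := dot v v; set b := dot v u.
have hw := dot_self (a *: u - b *: v).
have e1 : dot (a *: u - b *: v) (a *: u - b *: v) =
  conjc a * (a * dot u u - b * dot u v) - conjc b * (a * dot v u - b * dot v v).
  by rewrite !(dotDl, dotDr, dotNl, dotNr, dotZl, dotZr); ring.
have ha : conjc a = a by rewrite /a dot_self conjc_real.
have huv : dot u v = conjc b by rewrite /b dotC.
rewrite e1 ha huv -/b -/a in hw.
have H0 : 0 <= a * (a * dot u u - b * conjc b).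
  have -> : a * (a * dot u u - b * conjc b) = a * (a * dot u u - b * conjc b) - conjc b * (a * b - b * a) by ring.
  by rewrite hw ler0c sqr_ge0.
have H : 0 <= ((enorm v ^+ 2 * (enorm v ^+ 2 * enorm u ^+ 2 - Normc.normc b ^+ 2)) : R)%:C.
  rewrite rmorphM rmorphB !rmorphM /=.
  have eqb : b * conjc b = (Normc.normc b)%:C * (Normc.normc b)%:C.
    by rewrite -sqr_normc normcC expr2.
  by move: H0; rewrite eqb /a !dot_self !RCsq.
rewrite ler0c pmulr_rge0 ?exprn_gt0 // subr_ge0 in H.
rewrite huv normcJ' -(@ler_sqr R) ?nnegrE ?normc_ge0 ?mulr_ge0 ?enorm_ge0 //.
by rewrite exprMn mulrC.
Qed.

End Norms.
Section Norms2.
Variable R : realType.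
Local Notation C := (R[i]).
Local Open Scope complex_scope.

Lemma RC2 : (2 : R)%:C = 2 :> R[i].
Proof. by apply/eqP; rewrite eq_complex /= addr0 -mulr2n !eqxx. Qed.

Lemma dot_self' n (v : 'cV[C]_n) : dot v v = (enorm v)%:C * (enorm v)%:C.
Proof. by rewrite dot_self RCsq. Qed.

Lemma enormD n (u v : 'cV[C]_n) : enorm (u + v) <= enorm u + enorm v.
Proof.
set z := dot u v.
have E : (enorm (u + v) ^+ 2)%:C = (enorm u ^+ 2 + enorm v ^+ 2 + 2 * complex.Re z)%:C.
  have h2 : z + conjc z = (2 * complex.Re z)%:C.
    by rewrite addcJ rmorphM /= RC2.
  rewrite -dot_self dotDl !dotDr [dot v u]dotC -/z dot_self [dot v v]dot_self.
  rewrite !rmorphD /= -h2 /=; ring.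
move/complexI: E => E.
rewrite -(@ler_sqr R) ?nnegrE ?addr_ge0 ?enorm_ge0 // E sqrrD.
have H : complex.Re z <= enorm u * enorm v.
  apply: le_trans (CS u v); apply: le_trans (ler_norm _) _.
  by rewrite -lecR; exact: normc_ge_Re.
rewrite -mulr_natl; lra.
Qed.

End Norms2.
Section Norms3.
Variable R : realType.
Local Notation C := (R[i]).
Local Open Scope complex_scope.

Lemma enorm_sum n (I : Type) (r : seq I) (P : pred I) (F : I -> 'cV[C]_n) :
  enorm (\sum_(i <- r | P i) F i) <= \sum_(i <- r | P i) enorm (F i).
Proof.
elim/big_rec2: _ => [|i y1 y2 _ H]; first by rewrite enorm0.
by apply: le_trans (enormD _ _) _; rewrite lerD2l.
Qed.

Lemma enorm_rev n (u h : 'cV[C]_n) : enorm u - enorm h <= enorm (u + h).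
Proof.
have := enormD (u + h) (- h); rewrite addrK enormN; lra.
Qed.

Lemma normc_le_enorm n (v : 'cV[C]_n) i : Normc.normc (v i 0) <= enorm v.
Proof.
rewrite -(@ler_sqr R) ?nnegrE ?normc_ge0 ?enorm_ge0 // enorm_sqr.
rewrite (bigD1 i) //= lerDl sumr_ge0 // => j _; exact: sqr_ge0.
Qed.

Lemma normc_sum (I : Type) (r : seq I) (P : pred I) (F : I -> C) :
  Normc.normc (\sum_(i <- r | P i) F i) <= \sum_(i <- r | P i) Normc.normc (F i).
Proof.
elim/big_rec2: _ => [|i y1 y2 _ H]; first by rewrite Normc.normc0.
apply: le_trans (le_normcD _ _) _; by rewrite lerD2l.
Qed.

Lemma sqr_sum_le (I : Type) (r : seq I) (P : pred I) (F : I -> R) :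
  (forall i, P i -> 0 <= F i) ->
  \sum_(i <- r | P i) F i ^+ 2 <= (\sum_(i <- r | P i) F i) ^+ 2.
Proof.
move=> F0.
have : 0 <= \sum_(i <- r | P i) F i /\ 
  \sum_(i <- r | P i) F i ^+ 2 <= (\sum_(i <- r | P i) F i) ^+ 2.
  elim: r => [|a r [H1 H2]]; first by rewrite !big_nil expr0n.
  rewrite !big_cons; case: ifP => // Pa.
  have := F0 a Pa => Fa; split; first exact: addr_ge0.
  rewrite sqrrD; have : 0 <= F a * \sum_(j <- r | P j) F j by rewrite mulr_ge0.
  lra.
by case.
Qed.

Lemma enorm_le_sum n (v : 'cV[C]_n) : enorm v <= \sum_i Normc.normc (v i 0).
Proof.
rewrite -(@ler_sqr R) ?nnegrE ?enorm_ge0 ?sumr_ge0 // => [|i _]; last exact: normc_ge0.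
by rewrite enorm_sqr sqr_sum_le // => i _; exact: normc_ge0.
Qed.

Definition rhoset m n (A : 'M[C]_(m, n)) :=
  [set t : R | exists v : 'cV[C]_n, enorm v <= 1 /\ t = enorm (A *m v)]%classic.

Lemma rho_bounded m n (A : 'M[C]_(m, n)) : has_ubound (rhoset A).
Proof.
exists (\sum_(i < m) \sum_(j < n) Normc.normc (A i j)) => t [v [v1 ->]].
apply: le_trans (enorm_le_sum _) _; apply: ler_sum => i _.
rewrite mxE; apply: le_trans (normc_sum _ _ _) _; apply: ler_sum => j _.
rewrite Normc.normcM -[X in _ <= X]mulr1 ler_wpM2l ?normc_ge0 //.
exact: le_trans (normc_le_enorm _ _) v1.
Qed.

Lemma rho_ub m n (A : 'M[C]_(m, n)) v : enorm v <= 1 -> enorm (A *m v) <= rho A.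
Proof.
move=> v1; apply: (ub_le_sup (rho_bounded A)); by exists v.
Qed.

Lemma rho_ge0 m n (A : 'M[C]_(m, n)) : 0 <= rho A.
Proof.
have h := @rho_ub _ _ A 0; rewrite mulmx0 !enorm0 in h; exact: h ler01.
Qed.

Lemma rho_le m n (A : 'M[C]_(m, n)) v : enorm (A *m v) <= rho A * enorm v.
Proof.
have [v0|nv0] := eqVneq (enorm v) 0.
  by move/enorm_eq0: v0 => ->; rewrite mulmx0 !enorm0 mulr0.
have ev : 0 < enorm v by rewrite lt_def nv0 enorm_ge0.
set c : R := (enorm v)^-1.
have nc : Normc.normc (c%:C) = c.
  by rewrite /Normc.normc /= expr0n addr0 sqrtr_sqr ger0_norm // /c invr_ge0 enorm_ge0.
have := @rho_ub _ _ A (c%:C *: v).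
rewrite enormZ nc mulVf // lexx -scalemxAr enormZ nc => /(_ isT).
by rewrite ler_pdivrMl // mulrC.
Qed.

Lemma rho_adj m n (B : 'M[C]_(m, n)) u : enorm (adjmx B *m u) <= rho B * enorm u.
Proof.
set w := adjmx B *m u.
have [w0|nw0] := eqVneq (enorm w) 0.
  by rewrite w0 mulr_ge0 ?rho_ge0 ?enorm_ge0.
have ew : 0 < enorm w by rewrite lt_def nw0 enorm_ge0.
have h : (enorm w ^+ 2)%:C = dot u (B *m w) by rewrite -dot_self dot_adj.
have h2 : enorm w ^+ 2 <= enorm u * (rho B * enorm w).
  apply: le_trans (ler_wpM2l (enorm_ge0 _) (rho_le B w)).
  apply: le_trans (CS u (B *m w)).
  rewrite -h -lecR; apply: le_trans _ (normc_ge_Re _).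
  by rewrite lecR /= ler_norm.
have := ler_pM2r ew (enorm w) (rho B * enorm u); move=> <-.
rewrite -expr2 (_ : rho B * enorm u * enorm w = enorm u * (rho B * enorm w)) //.
by rewrite mulrA [rho B * _]mulrC.
Qed.

End Norms3.
Section Blocks.
Variable R : realType.
Local Notation C := (R[i]).
Local Open Scope complex_scope.

Lemma bdiv_bidx p d (l : 'I_p) (r : 'I_d) : bdiv (bidx l r) = l.
Proof.
apply: val_inj => /=; have hr := ltn_ord r.
by rewrite divnMDl ?(leq_ltn_trans _ hr) // divn_small // addn0.
Qed.

Lemma bmod_bidx p d (l : 'I_p) (r : 'I_d) : bmod (bidx l r) = r.
Proof.
by apply: val_inj => /=; rewrite modnMDl modn_small.
Qed.

Lemma bidxK p d (j : 'I_(p * d)) : bidx (bdiv j) (bmod j) = j.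
Proof. by apply: val_inj => /=; rewrite -divn_eq. Qed.

Lemma sum_bidx p d (F : 'I_(p * d) -> C) :
  \sum_(j < p * d) F j = \sum_(l < p) \sum_(r < d) F (bidx l r).
Proof.
rewrite pair_big /=.
rewrite (reindex (fun q : 'I_p * 'I_d => bidx q.1 q.2)) //.
exists (fun j => (bdiv j, bmod j)) => [[l r] _|j _] /=.
  by rewrite bdiv_bidx bmod_bidx.
by rewrite bidxK.
Qed.

Lemma blk_inj M d (x y : 'cV[C]_(M * d)) : (forall l, blk x l = blk y l) -> x = y.
Proof.
move=> H; apply/matrixP => j a; rewrite (ord1 a) -(bidxK j).
by have /matrixP/(_ (bmod j) 0) := H (bdiv j); rewrite !mxE.
Qed.

Lemma blkD M d (x y : 'cV[C]_(M * d)) l : blk (x + y) l = blk x l + blk y l.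
Proof. by apply/matrixP => i j; rewrite !mxE. Qed.

Lemma blkN M d (x : 'cV[C]_(M * d)) l : blk (- x) l = - blk x l.
Proof. by apply/matrixP => i j; rewrite !mxE. Qed.

Lemma blkB M d (x y : 'cV[C]_(M * d)) l : blk (x - y) l = blk x l - blk y l.
Proof. by rewrite blkD blkN. Qed.

Lemma blkZ M d a (x : 'cV[C]_(M * d)) l : blk (a *: x) l = a *: blk x l.
Proof. by apply/matrixP => i j; rewrite !mxE. Qed.

Lemma blk0 M d l : blk (0 : 'cV[C]_(M * d)) l = 0.
Proof. by apply/matrixP => i j; rewrite !mxE. Qed.

Lemma blkM p q d (A : 'M[C]_(p * d, q * d)) (w : 'cV[C]_(q * d)) l :
  blk (A *m w) l = \sum_(r < q) subblk A l r *m blk w r.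
Proof.
apply/matrixP => a b; rewrite (ord1 b) !mxE summxE sum_bidx.
by apply: eq_bigr => r _; rewrite !mxE; apply: eq_bigr => c _; rewrite !mxE.
Qed.

Lemma subblk_adj p q d (A : 'M[C]_(p * d, q * d)) l r :
  subblk (adjmx A) r l = adjmx (subblk A l r).
Proof. by apply/matrixP => a b; rewrite !mxE. Qed.

Definition res M d (T : {set 'I_M}) (x : 'cV[C]_(M * d)) : 'cV[C]_(#|T| * d) :=
  \col_(j < #|T| * d) x (bidx (enum_val (bdiv j)) (bmod j)) 0.

Lemma blk_res M d (T : {set 'I_M}) (x : 'cV[C]_(M * d)) t :
  blk (res T x) t = blk x (enum_val t).
Proof. by apply/matrixP => a b; rewrite !mxE bdiv_bidx bmod_bidx. Qed.

Lemma resD M d (T : {set 'I_M}) (x y : 'cV[C]_(M * d)) : res T (x + y) = res T x + res T y.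
Proof. by apply/matrixP => a b; rewrite !mxE. Qed.

Lemma resN M d (T : {set 'I_M}) (x : 'cV[C]_(M * d)) : res T (- x) = - res T x.
Proof. by apply/matrixP => a b; rewrite !mxE. Qed.

Lemma res0 M d (T : {set 'I_M}) : res T (0 : 'cV[C]_(M * d)) = 0.
Proof. by apply/matrixP => a b; rewrite !mxE. Qed.

Lemma Dmul_split L M d (D : 'M[C]_(L, M * d)) (T : {set 'I_M}) x :
  D *m x = colblk D T *m res T x + colblk D (~: T) *m res (~: T) x.
Proof.
apply/matrixP => i a; rewrite (ord1 a) !mxE !sum_bidx.
rewrite (bigID (fun l => l \in T)) /=; congr (_ + _).
  rewrite big_enum_val; apply: eq_bigr => t _; apply: eq_bigr => r _.
  by rewrite !mxE bdiv_bidx bmod_bidx.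
rewrite (eq_bigl (fun l => l \in ~: T)); last by move=> l; rewrite !inE.
rewrite big_enum_val; apply: eq_bigr => t _; apply: eq_bigr => r _.
by rewrite !mxE bdiv_bidx bmod_bidx.
Qed.

Definition bemb M d (i : 'I_M) (g : 'cV[C]_d) : 'cV[C]_(M * d) :=
  \col_j (if bdiv j == i then g (bmod j) 0 else 0).

Lemma blk_bemb M d (i : 'I_M) (g : 'cV[C]_d) l :
  blk (bemb i g) l = if l == i then g else 0.
Proof.
apply/matrixP => a b; rewrite (ord1 b) !mxE bdiv_bidx bmod_bidx.
by case: eqP => _; rewrite ?mxE.
Qed.

Lemma Dmul_bemb L M d (D : 'M[C]_(L, M * d)) i g :
  D *m bemb i g = Dblk D i *m g.
Proof.
apply/matrixP => a b; rewrite (ord1 b) !mxE sum_bidx (bigD1 i) //= [X in _ + X]big1 ?addr0.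
  by apply: eq_bigr => r _; rewrite !mxE bdiv_bidx bmod_bidx eqxx.
move=> l /negPf nl; rewrite big1 // => r _; rewrite !mxE bdiv_bidx nl mulr0 //.
Qed.

Definition ext M d (T : {set 'I_M}) (v : 'cV[C]_(#|T| * d)) : 'cV[C]_(M * d) :=
  \sum_(t < #|T|) bemb (enum_val t) (blk v t).

Lemma blk_sum M d (I : Type) (r : seq I) (P : pred I) (F : I -> 'cV[C]_(M * d)) l :
  blk (\sum_(i <- r | P i) F i) l = \sum_(i <- r | P i) blk (F i) l.
Proof.
elim/big_rec2: _ => [|i y1 y2 _ <-]; first by rewrite blk0.
by rewrite blkD.
Qed.

Lemma blk_ext M d (T : {set 'I_M}) (v : 'cV[C]_(#|T| * d)) t :
  blk (ext v) (enum_val t) = blk v t.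
Proof.
rewrite /ext blk_sum (bigD1 t) //= blk_bemb eqxx big1 ?addr0 // => t' nt.
rewrite blk_bemb; case: eqP => // /enum_val_inj et.
by rewrite et eqxx in nt.
Qed.

Lemma blk_ext_out M d (T : {set 'I_M}) (v : 'cV[C]_(#|T| * d)) l :
  l \notin T -> blk (ext v) l = 0.
Proof.
move=> lT; rewrite /ext blk_sum big1 // => t _; rewrite blk_bemb.
case: eqP => // el; by rewrite el enum_valP in lT.
Qed.

Lemma res_ext M d (T : {set 'I_M}) (v : 'cV[C]_(#|T| * d)) : res T (ext v) = v.
Proof. by apply: blk_inj => t; rewrite blk_res blk_ext. Qed.

Lemma res_out M d (T : {set 'I_M}) (x : 'cV[C]_(M * d)) :
  (forall l, l \in T -> blk x l = 0) -> res T x = 0.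
Proof.
move=> H; apply: blk_inj => t; rewrite blk_res blk0; apply: H; exact: enum_valP.
Qed.

Lemma Dmul_ext L M d (D : 'M[C]_(L, M * d)) (T : {set 'I_M}) v :
  D *m ext v = colblk D T *m v.
Proof.
rewrite (Dmul_split D T) res_ext res_out ?mulmx0 ?addr0 // => l.
by rewrite !inE => /blk_ext_out.
Qed.

Lemma blk_adj_colblk L M d (D : 'M[C]_(L, M * d)) (T : {set 'I_M}) (r : 'cV[C]_L) t :
  blk (adjmx (colblk D T) *m r) t = adjmx (Dblk D (enum_val t)) *m r.
Proof.
apply/matrixP => a b; rewrite (ord1 b) !mxE; apply: eq_bigr => i _.
by rewrite /adjmx !mxE bdiv_bidx bmod_bidx.
Qed.

Lemma res_eq0 M d (T : {set 'I_M}) (x : 'cV[C]_(M * d)) :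
  res T x = 0 -> res (~: T) x = 0 -> x = 0.
Proof.
move=> h1 h2; apply: blk_inj => l; rewrite blk0.
case: (boolP (l \in T)) => lT.
  by rewrite -(enum_rankK_in lT lT) -blk_res h1 blk0.
have lT' : l \in ~: T by rewrite !inE.
by rewrite -(enum_rankK_in lT' lT') -blk_res h2 blk0.
Qed.

End Blocks.
Section Aux.
Variable R : realType.
Local Notation C := (R[i]).

Lemma le_bigmax_seq (I : eqType) (r : seq I) (F : I -> R) i :
  i \in r -> F i <= \big[Num.max/0]_(j <- r) F j.
Proof.
elim: r => [|a r IH] //; rewrite inE big_cons le_max => /orP[/eqP ->|/IH ->].
  by rewrite lexx.
by rewrite orbT.
Qed.

Lemma le_bigmaxr n (F : 'I_n -> R) i : F i <= \big[Num.max/0]_(j < n) F j.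
Proof. by apply: le_bigmax_seq; rewrite mem_index_enum. Qed.

Lemma mulmx_col m n p (A : 'M[C]_(m, n)) (B : 'M[C]_(n, p)) c :
  A *m col c B = col c (A *m B).
Proof. by apply/matrixP => i j; rewrite !mxE; apply: eq_bigr => k _; rewrite !mxE. Qed.

Lemma inj_mul_eq0 m n p (A : 'M[C]_(m, n)) (B : 'M[C]_(n, p)) :
  (forall v : 'cV[C]_n, A *m v = 0 -> v = 0) -> A *m B = 0 -> B = 0.
Proof.
move=> inj AB; apply/matrixP => i c.
have := inj (col c B); rewrite mulmx_col AB => /(_ _).
have -> : col c (0 : 'M[C]_(m, p)) = 0 by apply/matrixP => a b; rewrite !mxE.
move=> /(_ erefl)/matrixP/(_ i 0); by rewrite !mxE.
Qed.

Lemma unit_of_inj n (G : 'M[C]_n) :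
  (forall v : 'cV[C]_n, G *m v = 0 -> v = 0) -> G \in unitmx.
Proof.
move=> inj; rewrite -unitmx_tr -row_free_unit -kermx_eq0.
have h : kermx G^T *m G^T = 0 by apply/eqP; rewrite -sub_kermx submx_refl.
have : (kermx G^T)^T = 0.
  apply: inj_mul_eq0 inj _; apply: (can_inj (@trmxK _ _ _)).
  by rewrite trmx_mul trmxK h trmx0.
by move/(congr1 trmx); rewrite trmxK trmx0 => ->.
Qed.

Lemma adjmx_inv n (G : 'M[C]_n) : adjmx (invmx G) = invmx (adjmx G).
Proof. by rewrite /adjmx map_invmx trmx_inv. Qed.

End Aux.
Section Main.
Variables (R : realType) (P M d : nat) (D : 'M[R[i]]_(P * d, M * d))
  (x0 : 'cV[R[i]]_(M * d)).
Local Notation C := (R[i]).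
Local Notation S := (bsupp x0).
Local Notation D0 := (colblk D (bsupp x0)).
Local Notation D1 := (colblk D (~: bsupp x0)).
Local Open Scope complex_scope.

Hypothesis spark : forall g : 'cV[C]_(M * d), g != 0 ->
  block_sparse (2 * #|bsupp x0|) g -> D *m g != 0.

Lemma supp_card (T : {set 'I_M}) (g : 'cV[C]_(M * d)) :
  supported_on T g -> (#|bsupp g| <= #|T|)%N.
Proof.
move=> H; apply: subset_leq_card; apply/fintype.subsetP => l; rewrite inE => nz.
by apply/negPn/negP => lT; rewrite (H l lT) eqxx in nz.
Qed.

Lemma spark_S (g : 'cV[C]_(M * d)) : supported_on S g -> D *m g = 0 -> g = 0.
Proof.
move=> sg Dg; case: (eqVneq g 0) => // nz.
have : block_sparse (2 * #|S|) g.
  by rewrite /block_sparse; have := supp_card sg; lia.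
by move/(spark nz); rewrite Dg eqxx.
Qed.

Lemma D0_inj (v : 'cV[C]_(#|S| * d)) : D0 *m v = 0 -> v = 0.
Proof.
move=> h; rewrite -(res_ext (T := S) v).
have -> : ext v = 0.
  apply: spark_S; last by rewrite Dmul_ext.
  by move=> l lS; apply: blk_ext_out.
by rewrite res0.
Qed.

Lemma dot0r n (u : 'cV[C]_n) : dot u 0 = 0.
Proof. by rewrite /dot big1 // => i _; rewrite mxE mulr0. Qed.

Lemma pinv_ok : penrose D0 (pinv D0).
Proof.
apply: (xgetPex 0).
set G := adjmx D0 *m D0.
have Gu : G \in unitmx.
  apply: unit_of_inj => v Gv; apply: D0_inj; apply: enorm_eq0.
  have : dot (D0 *m v) (D0 *m v) = 0.
    by rewrite -{1}[D0]adjmxK dot_adj mulmxA -/G Gv dot0r.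
  rewrite dot_self => /eqP; rewrite -(rmorph0 (real_complex R)) => /eqP/complexI.
  by move/eqP; rewrite sqrf_eq0 => /eqP.
exists (invmx G *m adjmx D0).
have XG : invmx G *m adjmx D0 *m D0 = 1%:M by rewrite -mulmxA -/G mulVmx.
split.
- by rewrite -mulmxA XG mulmx1.
- by rewrite XG mul1mx.
- rewrite !adjmxM adjmxK adjmx_inv /G adjmxM adjmxK -/G.
  by rewrite mulmxA.
- by rewrite XG adjmx1.
Qed.

Local Notation X := (pinv D0).

Lemma XD0 : X *m D0 = 1%:M.
Proof.
case: pinv_ok => h1 _ _ _.
apply/eqP; rewrite -subr_eq0; apply/eqP; apply: inj_mul_eq0 D0_inj _.
by rewrite mulmxBr mulmxA h1 mulmx1 subrr.
Qed.

Lemma D0X_adj : adjmx X *m adjmx D0 = D0 *m X.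
Proof. by case: pinv_ok => _ _ h3 _; rewrite -adjmxM. Qed.

Local Notation A := (X *m D1).

Hypothesis hc : rho_c A < 1.

Lemma colsum_le r : \sum_(t < #|S|) rho (subblk A t r) <= rho_c A.
Proof. exact: (le_bigmaxr (fun r => \sum_(t < #|S|) rho (subblk A t r))). Qed.

Lemma null_prop (h : 'cV[C]_(M * d)) : D *m h = 0 -> h != 0 ->
  \sum_(t < #|S|) enorm (blk (res S h) t) <
  \sum_(r < #|~: S|) enorm (blk (res (~: S) h) r).
Proof.
move=> Dh nh; set hS := res S h; set hS' := res (~: S) h.
have e1 : hS = - (A *m hS').
  have : D0 *m hS + D1 *m hS' = 0 by rewrite -Dmul_split.
  move/eqP; rewrite addr_eq0 => /eqP e.
  by rewrite -[hS]mul1mx -XD0 -(mulmxA X D0) e mulmxN mulmxA.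
set E := \sum_(r < #|~: S|) enorm (blk hS' r).
have hle : \sum_(t < #|S|) enorm (blk hS t) <= rho_c A * E.
  rewrite /E mulr_sumr.
  apply: (@le_trans _ _ (\sum_(t < #|S|) \sum_(r < #|~: S|)
                         rho (subblk A t r) * enorm (blk hS' r))).
    apply: ler_sum => t _; rewrite e1 blkN enormN blkM.
    apply: le_trans (enorm_sum _ _ _) _; apply: ler_sum => r _; exact: rho_le.
  rewrite exchange_big /=; apply: ler_sum => r _.
  rewrite -mulr_suml; apply: ler_wpM2r; [exact: enorm_ge0 | exact: colsum_le].
have E0 : 0 < E.
  rewrite lt_def; apply/andP; split; last by apply: sumr_ge0 => r _; exact: enorm_ge0.
  apply/negP; rewrite /E psumr_eq0 => [/allP H|r _]; last exact: enorm_ge0.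
  have hS'0 : hS' = 0.
    apply: blk_inj => r; rewrite blk0; apply: enorm_eq0; apply/eqP.
    exact: H r (mem_index_enum _).
  have hS0 : hS = 0 by rewrite e1 hS'0 mulmx0 oppr0.
  by move/negP: nh; apply; apply/eqP; apply: (res_eq0 (T := S)).
apply: le_lt_trans hle _.
by rewrite gtr_pMl.
Qed.

Lemma blk_x0_out l : l \notin S -> blk x0 l = 0.
Proof. by rewrite inE negbK => /eqP. Qed.

Lemma l21_split (z : 'cV[C]_(M * d)) :
  l21 z = \sum_(t < #|S|) enorm (blk z (enum_val t)) +
          \sum_(r < #|~: S|) enorm (blk z (enum_val r)).
Proof.
rewrite /l21 (bigID (fun l => l \in S)) /=; congr (_ + _).
  by rewrite big_enum_val.
rewrite (eq_bigl (fun l => l \in ~: S)); last by move=> l; rewrite !inE.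
by rewrite big_enum_val.
Qed.

Lemma LOPT_ok : LOPT_recovers D (D *m x0) x0.
Proof.
split => // x Dx nx.
set h := x - x0.
have Dh : D *m h = 0 by rewrite mulmxBr Dx subrr.
have nh : h != 0 by rewrite subr_eq0; apply/eqP.
have := null_prop Dh nh.
rewrite (l21_split x) (l21_split x0).
have -> : \sum_(r < #|~: S|) enorm (blk x0 (enum_val r)) = 0.
  rewrite big1 // => r _; rewrite blk_x0_out ?enorm0 //.
  by have := enum_valP r; rewrite !inE.
have hx : x = x0 + h by rewrite /h addrC subrK.
have e2 : \sum_(r < #|~: S|) enorm (blk (res (~: S) h) r) =
          \sum_(r < #|~: S|) enorm (blk x (enum_val r)).
  apply: eq_bigr => r _; rewrite blk_res hx blkD blk_x0_out ?add0r //.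
  by have := enum_valP r; rewrite !inE.
have e3 : \sum_(t < #|S|) enorm (blk x0 (enum_val t)) - 
          \sum_(t < #|S|) enorm (blk (res S h) t) <=
          \sum_(t < #|S|) enorm (blk x (enum_val t)).
  rewrite -sumrB; apply: ler_sum => t _.
  by rewrite blk_res hx blkD enorm_rev.
rewrite e2 addr0 => H.
lra.
Qed.

Lemma norm_sub_sq n (r v : 'cV[C]_n) (t a : R) : dot r v = a%:C ->
  enorm (r - t%:C *: v) ^+ 2 = enorm r ^+ 2 - 2 * (t * a) + t * t * enorm v ^+ 2.
Proof.
move=> drv.
have dvr : dot v r = a%:C by rewrite dotC drv conjc_real.
have eq1 : (enorm (r - t%:C *: v) ^+ 2)%:C =
           (enorm r ^+ 2)%:C - 2 * (t%:C * a%:C) + t%:C * t%:C * (enorm v ^+ 2)%:C.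
  rewrite -!dot_self !(dotDl, dotDr, dotNl, dotNr, dotZl, dotZr) drv dvr.
  rewrite conjc_real; ring.
apply: (@complexI R); rewrite eq1.
move: (enorm r ^+ 2) (enorm v ^+ 2) => q w.
by rewrite rmorphD rmorphB !rmorphM /= RC2.
Qed.

Lemma ortho (y : 'cV[C]_(P * d)) (T : {set 'I_M}) (x : 'cV[C]_(M * d)) i :
  ls_sol D y T x -> i \in T -> adjmx (Dblk D i) *m (y - D *m x) = 0.
Proof.
move=> [sx opt] iT.
set r := y - D *m x; set g := adjmx (Dblk D i) *m r.
apply: enorm_eq0; have [//|ng] := eqVneq (enorm g) 0.
have eg : 0 < enorm g by rewrite lt_def ng enorm_ge0.
set v := Dblk D i *m g.
set a := enorm g ^+ 2; set b := enorm v ^+ 2.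
have a0 : 0 < a by rewrite exprn_gt0.
have b0 : 0 <= b by rewrite sqr_ge0.
set t := a / (b + 1).
have t0 : 0 < t by rewrite divr_gt0 // ltr_wpDl.
set c : C := t%:C.
set z := x + c *: bemb i g.
have sz : supported_on T z.
  move=> l lT; rewrite /z blkD blkZ blk_bemb (sx l lT).
  by case: eqP => [el|_]; [rewrite el iT in lT | rewrite scaler0 addr0].
have ez : y - D *m z = r - c *: v.
  by rewrite /z mulmxDr -scalemxAr Dmul_bemb opprD addrA.
have := opt z sz; rewrite ez => H.
have drv : dot r v = a%:C by rewrite /v -dot_adj -/g dot_self.
have eq2 := norm_sub_sq t drv.
have H2 : enorm r ^+ 2 <= enorm (r - c *: v) ^+ 2.
  by rewrite (@ler_sqr R) ?nnegrE ?enorm_ge0.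
rewrite eq2 -/b in H2.
have tb : t * b <= a.
  rewrite /t mulrAC ler_pdivrMr ?ltr_wpDl //; nra.
have : t * (2 * a - t * b) <= 0 by lra.
rewrite pmulr_rle0 //; lra.
Qed.

Lemma K2 (z : 'cV[C]_(#|S| * d)) : (0 < #|S|)%N -> D0 *m z != 0 ->
  exists l, [/\ l \in S, 0 < enorm (adjmx (Dblk D l) *m (D0 *m z)) &
    forall i, i \notin S -> enorm (adjmx (Dblk D i) *m (D0 *m z)) <
                             enorm (adjmx (Dblk D l) *m (D0 *m z))].
Proof.
move=> kpos nz.
set rr := D0 *m z; set w := adjmx D0 *m rr.
have rrw : rr = adjmx X *m w.
  by rewrite /w mulmxA D0X_adj /rr !mulmxA -(mulmxA D0 X D0) XD0 mulmx1.
pose t0 : 'I_#|S| := Ordinal kpos.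
pose F t := enorm (blk w t).
have [tm _ Hm] : {tm | true & forall t, F t <= F tm}.
  case: (@arg_maxP _ _ _ t0 predT F isT) => tm _ Hm; exists tm => // t.
  exact: Hm.
have eF : forall t, enorm (adjmx (Dblk D (enum_val t)) *m rr) = F t.
  by move=> t; rewrite /F /w blk_adj_colblk.
have mpos : 0 < F tm.
  rewrite lt_def enorm_ge0 andbT; apply/eqP => F0.
  have w0 : w = 0.
    apply: blk_inj => t; rewrite blk0; apply: enorm_eq0; apply/eqP.
    by rewrite eq_le enorm_ge0 andbT -F0; exact: Hm.
  by move: nz; rewrite -/rr rrw w0 mulmx0 eqxx.
exists (enum_val tm); split; first exact: enum_valP.
  by rewrite eF.
move=> i iS; have iS' : i \in ~: S by rewrite finset.in_setC.
rewrite eF -(enum_rankK_in iS' iS').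
set t' := enum_rank_in iS' i.
rewrite -blk_adj_colblk rrw mulmxA -adjmxM blkM.
apply: le_lt_trans (enorm_sum _ _ _) _.
apply: (@le_lt_trans _ _ (\sum_(t < #|S|) rho (subblk A t t') * F tm)).
  apply: ler_sum => t _; rewrite subblk_adj.
  apply: le_trans (rho_adj _ _) _; apply: ler_wpM2l; [exact: rho_ge0 | exact: Hm].
rewrite -mulr_suml.
apply: (@le_lt_trans _ _ (rho_c A * F tm)).
  by apply: ler_wpM2r; [exact: ltW | exact: colsum_le].
by rewrite gtr_pMl.
Qed.

Lemma bomp_ok k (sel : nat -> 'I_M) (xs : nat -> 'cV[C]_(M * d)) :
  #|S| = k -> bomp_run D (D *m x0) sel xs k ->
  (forall l : nat, (l < k)%N ->
     sel l \in S /\ (forall j : nat, (j < l)%N -> sel j != sel l))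
  /\ xs k = x0.
Proof.
move=> hk [xs0 run].
pose Sel l := [set sel (nat_of_ord j) | j : 'I_l].
have inv : forall l, (l <= k)%N ->
  (forall j, (j < l)%N -> sel j \in S /\ (forall j', (j' < j)%N -> sel j' != sel j))
  /\ supported_on (Sel l) (xs l).
  elim => [_|l IH lk].
    by split => // m _; rewrite xs0 blk0.
  have [IH1 IH2] := IH (ltnW lk).
  have [selmax ls] := run l lk.
  have SelS : Sel l \subset S.
    by apply/fintype.subsetP => m /imsetP [j _ ->]; exact: (IH1 j (ltn_ord j)).1.
  set g := x0 - xs l.
  have sg : supported_on S g.
    move=> m mS; rewrite blkB blk_x0_out // IH2 ?subr0 //.
    by apply: contra mS; exact: (fintype.subsetP SelS m).
  have rreq : D *m x0 - D *m xs l = D0 *m res S g.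
    rewrite -mulmxBr -/g (Dmul_split D S g) [res (~: S) g]res_out ?mulmx0 ?addr0 //.
    by move=> m; rewrite finset.in_setC; exact: sg m.
  have nz : D0 *m res S g != 0.
    apply/eqP => h0.
    have g0 : g = 0 by apply: spark_S => //; rewrite (Dmul_split D S g) h0
       [res (~: S) g]res_out ?mulmx0 ?addr0 // => m; rewrite finset.in_setC; exact: sg m.
    have : (#|S| <= #|Sel l|)%N.
      apply: subset_leq_card; apply/fintype.subsetP => m mS.
      apply/negPn/negP => nm.
      have : blk x0 m = 0.
        by have := congr1 (fun v => blk v m) g0; rewrite /= blkB blk0 IH2 // subr0.
      by move=> hb; move: mS; rewrite inE hb eqxx.
    have hcard : (#|Sel l| <= l)%N.
      by have := leq_imset_card (fun j : 'I_l => sel (nat_of_ord j)) 'I_l; rewrite card_ord.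
    move=> h1; have := leq_trans h1 hcard; lia.
  have kpos : (0 < #|S|)%N by lia.
  have [ls' [ls'S pos dom]] := K2 kpos nz.
  rewrite rreq in selmax.
  have selS : sel l \in S.
    apply/negPn/negP => ns.
    have h1 := dom _ ns; have h2 := selmax ls'.
    by rewrite ltNge h2 in h1.
  split; last exact: ls.1.
  move=> j; rewrite ltnS leq_eqVlt => /orP [/eqP ->|jl]; last exact: IH1 j jl.
  split => // j' j'l.
  have l1 : l.-1.+1 = l by rewrite prednK //; lia.
  have ls0 : ls_sol D (D *m x0) (Sel l) (xs l).
    have := (run l.-1 _).2; rewrite l1; apply; lia.
  have hin : sel j' \in Sel l by apply/imsetP; exists (Ordinal j'l).
  have o := ortho ls0 hin; rewrite rreq in o.
  apply/eqP => e; move: pos; rewrite ltNge; move/negP; apply.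
  by apply: le_trans (selmax ls') _; rewrite -e o enorm0.
have [I1 I2] := inv k (leqnn k).
split; first by move=> l lk; exact: I1 l lk.
case: k hk run I1 I2 inv => [|k] hk run I1 I2 inv.
  rewrite xs0; apply: blk_inj => l; rewrite blk0 blk_x0_out //.
  by move/cards0_eq: hk => ->; rewrite inE.
have SelE : Sel k.+1 = S.
  apply/eqP; rewrite eqEcard; apply/andP; split.
    by apply/fintype.subsetP => m /imsetP [j _ ->]; exact: (I1 j (ltn_ord j)).1.
  rewrite hk card_imset ?card_ord // => a b e.
  apply: val_inj => /=; case: (ltngtP a b) => // hab.
    by have := (I1 b (ltn_ord b)).2 a hab; rewrite e eqxx.
  by have := (I1 a (ltn_ord a)).2 b hab; rewrite e eqxx.
have [sk opt] := (run k (ltnSn k)).2.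
have sx0 : supported_on (Sel k.+1) x0.
  by move=> m hm; apply: blk_x0_out; rewrite -SelE.
have := opt x0 sx0; rewrite subrr enorm0 => H.
have H0 : enorm (D *m x0 - D *m xs k.+1) = 0.
  by apply/eqP; rewrite eq_le H enorm_ge0.
move/enorm_eq0: H0; rewrite -mulmxBr => Dg.
apply/eqP; rewrite eq_sym -subr_eq0; apply/eqP; apply: spark_S Dg.
move=> m mS; rewrite blkB blk_x0_out // sk ?subr0 //.
by rewrite -SelE in mS.
Qed.

End Main.

Unset Implicit Arguments.
Set Strict Implicit.

Theorem theorem2 (R : realType) (P M d k : nat)
  (D : 'M[R[i]]_(P * d, M * d)) (x0 : 'cV[R[i]]_(M * d)) :
  (* columns of D have unit Euclidean norm *)
  (forall j : 'I_(M * d), enorm (col j D) = 1) ->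
  (* D g <> 0 for every nonzero block 2k-sparse g *)
  (forall g : 'cV[R[i]]_(M * d), g != 0 -> block_sparse (2 * k) g -> D *m g != 0) ->
  (* x0 is block k-sparse, its support having k blocks *)
  block_sparse k x0 -> #|bsupp x0| = k ->
  (* rho_c(D0^dagger Dbar0) < 1 *)
  rho_c (pinv (colblk D (bsupp x0)) *m colblk D (~: bsupp x0)) < 1 ->
  (* L-OPT recovers x0 from y = D x0 *)
  LOPT_recovers D (D *m x0) x0 /\
  (* every run of BOMP on y = D x0 picks, at each of the first k stages, a correct
     block not selected before, and its coefficient vector after k stages is x0 *)
  (forall (sel : nat -> 'I_M) (xs : nat -> 'cV[R[i]]_(M * d)),
     bomp_run D (D *m x0) sel xs k ->
     (forall l : nat, (l < k)%N ->
        sel l \in bsupp x0 /\ (forall j : nat, (j < l)%N -> sel j != sel l))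
     /\ xs k = x0).
Proof.
move=> _ Hsp _ hk hrho.
have spark' : forall g : 'cV[R[i]]_(M * d), g != 0 ->
    block_sparse (2 * #|bsupp x0|) g -> D *m g != 0 by rewrite hk.
split; first exact: (LOPT_ok spark' hrho).
move=> sel xs run; exact: (bomp_ok spark' hrho hk run).
Qed.
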